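(* Let $G=(V,E)$ be a graph (a starting position of the Maker-Breaker domination game) with minimum degree $\delta$. If $|V|<2^{\delta}$, then Dominator has a winning strategy for the Maker-Breaker domination game on $G$ when playing second.
   Context: The Maker-Breaker domination game on a finite graph $G=(V,E)$: two players, Dominator and Staller, alternately choose a not-yet-chosen vertex of $G$ (without passing), starting with all vertices unchosen. When all vertices have been chosen, Dominator wins if the set of vertices he chose is a dominating set of $G$; otherwise (some vertex has its whole closed neighborhood chosen by Staller) Staller wins. *)

(* Defs.v *)
From mathcomp Require Import all_boot.
Set Implicit Arguments. Unset Strict Implicit. Unset Printing Implicit Defensive.

Definition simple_graph (T : finType) (e : rel T) : Prop :=
  symmetric e /\ irreflexive e.

Definition deg (T : finType) (e : rel T) (v : T) : nat := #|[set u | e v u]|.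

Definition dominating (T : finType) (e : rel T) (D : {set T}) : bool :=
  [forall v, (v \in D) || [exists u in D, e v u]].

(* dom_wins n D S stallers_turn : with fuel n, from the position where
   Dominator has chosen D and Staller has chosen S, and it is Staller's turn
   iff [stallers_turn], Dominator has a winning strategy.  The fuel is
   #|T| at the start, which always suffices since every move chooses a new
   vertex. *)
Fixpoint dom_wins (T : finType) (e : rel T) (n : nat) (D S : {set T})
    (stallers_turn : bool) : bool :=
  match n with
  | 0 => dominating e D
  | n'.+1 =>
      if D :|: S == setT then dominating e D
      else if stallers_turn then
        [forall v, (v \notin D :|: S) ==> dom_wins e n' D (v |: S) false]
      else
        [exists v, (v \notin D :|: S) && dom_wins e n' (v |: D) S true]
  end.

(* Dominator wins the Maker-Breaker domination game playing second
   (Staller makes the first move). *)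
Definition dominator_wins_second (T : finType) (e : rel T) : bool :=
  dom_wins e #|T| set0 set0 true.

(* Main.v *)
Require Import Defs.
From mathcomp Require Import all_boot.
From mathcomp Require Import zify.

Section Pot.
Variable (T : finType) (e : rel T).

Definition Nv (v : T) : {set T} := v |: [set u | e v u].
Definition NN := #|T|.+1.
Definition alive (D : {set T}) v := [forall u, (u \in Nv v) ==> (u \notin D)].
Definition w (D S : {set T}) v := if alive D v then 2 ^ (NN - #|Nv v :\: S|) else 0.
Definition Psi D S := \sum_v w D S v.
Definition gain D S x := \sum_(v | x \in Nv v) w D S v.

Lemma L1 (D S : {set T}) x : x \notin S -> Psi D (x |: S) = Psi D S + gain D S x.
Proof.
move=> xS; rewrite /Psi /gain (bigID (fun v => x \in Nv v)) /=.
rewrite [X in _ = X + _](bigID (fun v => x \in Nv v)) /=.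
rewrite -addnA [_ + gain _ _ _]addnC addnA.
congr (_ + _); last first.
  apply: eq_bigr => v xN; rewrite /w; case: (alive D v) => //.
  have -> : Nv v :\: (x |: S) = Nv v :\: S; last by []; apply/setP => u; rewrite !inE.
  case: (eqVneq u x) => [->|_] //=; move: xN; rewrite /Nv !inE => /negbTE ->; by rewrite andbF.
rewrite -big_split /=; apply: eq_bigr => v xN; rewrite /w.
case: (alive D v) => //.
have E : Nv v :\: S = x |: (Nv v :\: (x |: S)).
  apply/setP => u; move: xN; rewrite /Nv !inE => xN.
  by case: (eqVneq u x) => [->|] //=; rewrite xN (negbTE xS).
have Hx : x \notin Nv v :\: (x |: S) by rewrite !inE eqxx.
rewrite E cardsU1 Hx /=.
have : #|Nv v :\: (x |: S)| < NN.
  by rewrite /NN ltnS max_card.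
set k := #|_|; move=> hk.
have -> : NN - k = (NN - k.+1).+1 by lia.
by rewrite expnS add1n mul2n -addnn.
Qed.

Lemma L2 (D S : {set T}) y : Psi D S = Psi (y |: D) S + gain D S y.
Proof.
rewrite /Psi /gain (bigID (fun v => y \in Nv v)) /=.
rewrite [X in _ = X + _](bigID (fun v => y \in Nv v)) /=.
rewrite [X in _ = X + _ + _]big1 ?add0n; last first.
  move=> v yN; rewrite /w.
  case: ifP => // /forallP /(_ y); by rewrite yN /Nv !inE eqxx.
rewrite addnC; congr (_ + _).
apply: eq_bigr => v yN; rewrite /w; move: yN; rewrite /Nv !inE => yN.
have -> : alive (y |: D) v = alive D v.
  apply/forallP/forallP => H u; move: (H u); rewrite !inE;
    case: (eqVneq u y) => [->|] //=; rewrite ?(negbTE yN) //=.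
by [].
Qed.

Lemma L3 (D S : {set T}) y v : w (y |: D) S v <= w D S v.
Proof.
rewrite /w; case: ifP => // /forallP H.
have -> : alive D v.
  apply/forallP => u; apply/implyP => uN; move/implyP: (H u) => /(_ uN).
  by rewrite !inE negb_or => /andP [].
by [].
Qed.

Lemma gain_mono (D S : {set T}) y x : gain (y |: D) S x <= gain D S x.
Proof. by apply: leq_sum => v _; apply: L3. Qed.

Lemma gain_le (D S : {set T}) x : gain D S x <= Psi D S.
Proof.
rewrite /gain /Psi [X in _ <= X](bigID (fun v => x \in Nv v)) /=.
exact: leq_addr.
Qed.

Lemma L4 (D S : {set T}) : D :|: S = setT -> Psi D S < 2 ^ NN -> dominating e D.
Proof.
move=> DS HP; apply/forallP => v; apply/negPn/negP => /negP H.
have Al : alive D v.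
  apply/forallP => u; apply/implyP; rewrite !inE => /orP [/eqP ->|euv].
    by apply/negP => vD; apply: H; rewrite vD.
  by apply/negP => uD; apply: H; apply/orP; right; apply/existsP; exists u; rewrite uD.
have E : Nv v :\: S = set0.
  apply/setP => u; rewrite !inE; apply/negP => /andP [uS uN].
  move/forallP: Al => /(_ u) /implyP; rewrite /Nv !inE => /(_ uN) uD.
  have : u \in D :|: S by rewrite DS inE.
  by rewrite inE (negbTE uD) (negbTE uS).
have : w D S v <= Psi D S by rewrite /Psi (bigD1 v) //= leq_addr.
by rewrite /w Al E cards0 subn0 => h; move: (leq_ltn_trans h HP); rewrite ltnn.
Qed.

Lemma compl_card (D S : {set T}) v : v \notin D :|: S ->
  #|~: (D :|: (v |: S))| = #|~: (D :|: S)| - 1.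
Proof.
move=> vn.
have E : ~: (D :|: S) = v |: ~: (D :|: (v |: S)).
  apply/setP => u; rewrite !inE.
  case: (eqVneq u v) => [->|] //=; first by move: vn; rewrite inE.
have Hv : v \notin ~: (D :|: (v |: S)) by rewrite !inE eqxx orbT.
by rewrite E cardsU1 Hv add1n subn1.
Qed.

Lemma compl_card2 (D S : {set T}) v : v \notin D :|: S ->
  #|~: ((v |: D) :|: S)| = #|~: (D :|: S)| - 1.
Proof.
move=> vn; rewrite -(compl_card D S v vn); congr #|~: _|.
by apply/setP => u; rewrite !inE; case: (u == v); rewrite ?orbT.
Qed.

Lemma main n : forall D S : {set T},
  #|~: (D :|: S)| <= n ->
  (Psi D S < 2 ^ NN ->
     (forall x, x \notin D :|: S -> Psi D S + gain D S x < 2 ^ NN) ->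
     dom_wins e n D S true) /\
  (Psi D S < 2 ^ NN -> dom_wins e n D S false).
Proof.
elim: n => [|n IH] D S hc.
  have DS : D :|: S = setT.
    have H0 : ~: (D :|: S) = set0 by apply: cards0_eq; lia.
    by move/(congr1 (fun A => ~: A)): H0; rewrite setCK setC0.
  by split; [move=> HP _ | move=> HP]; exact: (L4 D S DS HP).
split; [move=> HP Hg | move=> HP]; rewrite /=; (case: ifP => [/eqP DS|DSn]; first exact: (L4 D S DS HP)).
  apply/forallP => v; apply/implyP => vn.
  have vS : v \notin S by move: vn; rewrite inE negb_or => /andP [].
  apply: (proj2 (IH _ _ _)).
    rewrite compl_card //; lia.
  by rewrite L1 //; apply: Hg.
have [y0 y0n] : exists y0, y0 \notin D :|: S.
  case/boolP: [exists y, y \notin D :|: S] => [/existsP //| /existsPn H].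
  suff : D :|: S == setT by rewrite DSn.
  by apply/eqP/setP => u; move: (H u); rewrite !inE => /negPn ->.
case: (@arg_maxnP _ y0 (fun y => y \notin D :|: S) (gain D S) y0n) => y yn ymax.
apply/existsP; exists y; rewrite yn /=.
have HP' : Psi (y |: D) S <= Psi D S by rewrite (L2 D S y) leq_addr.
apply: (proj1 (IH _ _ _)).
- rewrite compl_card2 //; lia.
- exact: leq_ltn_trans HP' HP.
move=> x xn.
have xn' : x \notin D :|: S.
  by move: xn; rewrite !inE !negb_or => /andP [/andP [_ ->] ->].
apply: (leq_ltn_trans _ HP); rewrite (L2 D S y) leq_add2l.
exact: leq_trans (gain_mono _ _ _ _) (ymax _ xn').
Qed.

End Pot.

Theorem proposition3 (T : finType) (e : rel T) (delta : nat) :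
  simple_graph e ->
  (exists v : T, deg e v = delta) ->
  (forall v : T, delta <= deg e v) ->
  #|T| < 2 ^ delta ->
  dominator_wins_second e.
Proof.
move=> [_ irr] [v0 hv0] hmin hT.
rewrite /dominator_wins_second.
have Hd : delta < NN T by rewrite /NN ltnS -hv0 /deg max_card.
set m := NN T - delta.+1.
have EN : 2 ^ NN T = 2 * 2 ^ delta * 2 ^ m.
  by rewrite -expnS -expnD /m subnKC.
have HP : @Psi T e set0 set0 <= #|T| * 2 ^ m.
  rewrite /Psi -sum1_card big_distrl /=; apply: leq_sum => v _.
  rewrite mul1n /w.
  have -> : @alive T e set0 v by apply/forallP => u; rewrite in_set0 implybT.
  rewrite setD0 leq_exp2l // /m leq_sub2l //.
  rewrite /Nv cardsU1 inE irr add1n ltnS; exact: hmin.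
have H2 : 2 * @Psi T e set0 set0 < 2 ^ NN T.
  rewrite EN; have : 0 < 2 ^ m by rewrite expn_gt0.
  move: HP hT; set P := Psi _ _ _ _; set a := 2 ^ m; set b := 2 ^ delta; nia.
apply: (proj1 (@main T e _ _ _ _)).
- exact: max_card.
- lia.
move=> x _; have := @gain_le T e set0 set0 x; lia.
Qed.
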